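(* Let $(X,+)$ be an uncountable abelian Polish group with a complete metric $d$. Let $\mathcal I\subseteq\mathcal P(X)$ be a proper, translation-invariant $\sigma$-ideal containing singletons and having a Borel base, such that for every Borel set $B\notin\mathcal I$ and every family $\mathcal D\subseteq\mathcal I$ with $|\mathcal D|<\mathfrak c$ we have $|B\setminus\bigcup\mathcal D|=\mathfrak c$, and such that there is $a$ in the range of $d$, $a\ne0$, with $\{y\in X:d(x,y)=a\}\in\mathcal I$ for every $x\in X$. If $2^\kappa\le\mathfrak c$ for every cardinal $\kappa<\mathfrak c$, then there exists a family $\{B_\xi:\xi<\mathfrak c\}$ of pairwise disjoint subsets of $X$ such that (1) every $B_\xi$ is completely $\mathcal I$-nonmeasurable, (2) no $B_\xi$ is a $2$-covering, and (3) $\{B_\xi:\xi<\mathfrak c\}$ is a ${<}\mathfrak c$-S-covering.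
   Context: $\mathfrak c=|\mathbb R|$. A set $N\subseteq X$ is completely $\mathcal I$-nonmeasurable if for every Borel $A\notin\mathcal I$ both $A\cap N\notin\mathcal I$ and $A\setminus N\notin\mathcal I$. A set $A\subseteq X$ is a $2$-covering if for every $C\subseteq X$ with $|C|=2$ there is $x\in X$ with $C+x\subseteq A$. A family $\mathcal A$ of pairwise disjoint subsets of $X$ is a ${<}\kappa$-S-covering if for every $F\subseteq X$ with $|F|<\kappa$ there is $t\in X$ such that $F+t\subseteq\bigcup\mathcal A$ and $|(F+t)\cap A|\le1$ for all $A\in\mathcal A$. *)

(* Defs.v *)
From Stdlib Require Import Reals Classical.
Open Scope R_scope.

Definition pset (T : Type) := T -> Prop.

Definition subset {T} (A B : pset T) : Prop := forall x, A x -> B x.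

Definition card_le {T U} (A : pset T) (B : pset U) : Prop :=
  exists f : T -> U, (forall x, A x -> B (f x)) /\
    (forall x y, A x -> A y -> f x = f y -> x = y).
Definition card_lt {T U} (A : pset T) (B : pset U) : Prop :=
  card_le A B /\ ~ card_le B A.
Definition card_eq {T U} (A : pset T) (B : pset U) : Prop :=
  card_le A B /\ card_le B A.

(* the continuum c = |R| is represented by the full set of reals *)
Definition continuum : pset R := fun _ => True.

Definition powerset {T} (K : pset T) : pset (pset T) := fun A => subset A K.

Definition has_two_elements {T} (C : pset T) : Prop :=
  exists a b, a <> b /\ forall x, C x <-> (x = a \/ x = b).

Definition is_metric {X} (d : X -> X -> R) : Prop :=
  (forall x y, 0 <= d x y) /\ (forall x y, d x y = 0 <-> x = y) /\
  (forall x y, d x y = d y x) /\ (forall x y z, d x z <= d x y + d y z).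

Definition d_open {X} (d : X -> X -> R) (U : pset X) : Prop :=
  forall x, U x -> exists eps, 0 < eps /\ forall y, d x y < eps -> U y.

Definition sigma_algebra {X} (S : pset (pset X)) : Prop :=
  S (fun _ => True) /\
  (forall A, S A -> S (fun x => ~ A x)) /\
  (forall A : nat -> pset X, (forall n, S (A n)) -> S (fun x => exists n, A n x)).

Definition Borel {X} (d : X -> X -> R) (A : pset X) : Prop :=
  forall S : pset (pset X), sigma_algebra S -> (forall U, d_open d U -> S U) -> S A.

Definition separable {X} (d : X -> X -> R) : Prop :=
  exists D : nat -> X, forall x eps, 0 < eps -> exists n, d x (D n) < eps.

Definition cauchy {X} (d : X -> X -> R) (s : nat -> X) : Prop :=
  forall eps, 0 < eps -> exists N, forall m n, (N <= m)%nat -> (N <= n)%nat -> d (s m) (s n) < eps.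
Definition converges {X} (d : X -> X -> R) (s : nat -> X) (l : X) : Prop :=
  forall eps, 0 < eps -> exists N, forall n, (N <= n)%nat -> d (s n) l < eps.
Definition complete_metric {X} (d : X -> X -> R) : Prop :=
  forall s, cauchy d s -> exists l, converges d s l.

Definition uncountable (X : Type) : Prop := ~ exists f : X -> nat, forall x y, f x = f y -> x = y.

Definition abelian_group {X} (add : X -> X -> X) (opp : X -> X) (zero : X) : Prop :=
  (forall x y z, add x (add y z) = add (add x y) z) /\
  (forall x y, add x y = add y x) /\
  (forall x, add zero x = x) /\ (forall x, add (opp x) x = zero).

Definition abelian_polish_group {X} (d : X -> X -> R)
  (add : X -> X -> X) (opp : X -> X) (zero : X) : Prop :=
  abelian_group add opp zero /\ is_metric d /\ complete_metric d /\ separable d /\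
  (forall x y eps, 0 < eps -> exists delta, 0 < delta /\
     forall x' y', d x x' < delta -> d y y' < delta -> d (add x y) (add x' y') < eps) /\
  (forall x eps, 0 < eps -> exists delta, 0 < delta /\
     forall x', d x x' < delta -> d (opp x) (opp x') < eps).

Definition translate {X} (add : X -> X -> X) (A : pset X) (t : X) : pset X :=
  fun y => exists a, A a /\ y = add a t.

Definition sigma_ideal {X} (I : pset (pset X)) : Prop :=
  (forall A B, subset A B -> I B -> I A) /\
  (forall A : nat -> pset X, (forall n, I (A n)) -> I (fun x => exists n, A n x)).
Definition proper_ideal {X} (I : pset (pset X)) : Prop := ~ I (fun _ => True).
Definition translation_invariant {X} (add : X -> X -> X) (I : pset (pset X)) : Prop :=
  forall A t, I A -> I (translate add A t).
Definition contains_singletons {X} (I : pset (pset X)) : Prop :=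
  forall x : X, I (fun y => y = x).
Definition has_Borel_base {X} (d : X -> X -> R) (I : pset (pset X)) : Prop :=
  forall A, I A -> exists B, Borel d B /\ subset A B /\ I B.

Definition completely_nonmeasurable {X} (d : X -> X -> R) (I : pset (pset X)) (N : pset X) : Prop :=
  forall A, Borel d A -> ~ I A ->
    ~ I (fun x => A x /\ N x) /\ ~ I (fun x => A x /\ ~ N x).

Definition two_covering {X} (add : X -> X -> X) (A : pset X) : Prop :=
  forall C, has_two_elements C -> exists x, subset (translate add C x) A.

Definition pairwise_disjoint {X} (F : pset (pset X)) : Prop :=
  forall A B, F A -> F B -> A <> B -> forall x, A x -> B x -> False.

(* F is a <kappa-S-covering, where kappa = |K| *)
Definition lt_S_covering {X V} (add : X -> X -> X) (K : pset V) (F : pset (pset X)) : Prop :=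
  pairwise_disjoint F /\
  forall G : pset X, card_lt G K -> exists t,
    subset (translate add G t) (fun x => exists A, F A /\ A x) /\
    forall A, F A -> forall u v, translate add G t u -> A u -> translate add G t v -> A v -> u = v.

Definition range {I T} (B : I -> pset T) : pset (pset T) := fun A => exists i, A = B i.

(* Main.v *)
Require Import Defs.
From Stdlib Require Import Reals Classical ClassicalEpsilon FunctionalExtensionality PropExtensionality Lia Lra Wellfounded ZArith.
From Stdlib Require Cantor.
Open Scope R_scope.

Lemma pset_ext {T} (A B : pset T) : (forall x, A x <-> B x) -> A = B.
Proof. intro H; apply functional_extensionality; intro x; apply propositional_extensionality; auto. Qed.

Lemma cle_refl {T} (A : pset T) : card_le A A.
Proof. exists (fun x => x); split; auto. Qed.

Lemma cle_trans {T U V} (A : pset T) (B : pset U) (C : pset V) :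
  card_le A B -> card_le B C -> card_le A C.
Proof.
  intros [f [Hf1 Hf2]] [g [Hg1 Hg2]]; exists (fun x => g (f x)); split; auto.
Qed.

Lemma cle_sub {T} (A B : pset T) : subset A B -> card_le A B.
Proof. intro H; exists (fun x => x); split; auto. Qed.

Lemma clt_le_trans {T U V} (A : pset T) (B : pset U) (C : pset V) :
  card_le A B -> card_lt B C -> card_lt A C.
Proof.
  intros H [H1 H2]; split. eapply cle_trans; eauto.
  intro H3; apply H2; eapply cle_trans; eauto.
Qed.

Lemma choice_on {A B} (b0 : B) (P : A -> Prop) (Q : A -> B -> Prop) :
  (forall a, P a -> exists b, Q a b) -> exists f : A -> B, forall a, P a -> Q a (f a).
Proof.
  intro H.
  destruct (choice (fun a b => P a -> Q a b)) as [f Hf].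
  - intro a. destruct (classic (P a)) as [Hp|Hp].
    + destruct (H a Hp) as [b Hb]; exists b; auto.
    + exists b0; tauto.
  - exists f; auto.
Qed.

Definition full (T : Type) : pset T := fun _ => True.
Definition small {T} (A : pset T) := card_lt A continuum.
Definition countable (T : Type) := exists f : T -> nat, forall x y, f x = f y -> x = y.

Lemma countable_nat : countable nat.
Proof. exists (fun n => n); auto. Qed.

Lemma countable_prod T U : countable T -> countable U -> countable (T * U).
Proof.
  intros [f Hf] [g Hg]; exists (fun p => Cantor.to_nat (f (fst p), g (snd p))).
  intros [a b] [c e] H.
  assert (H' := f_equal Cantor.of_nat H). cbv beta in H'. rewrite !Cantor.cancel_of_to in H'.
  simpl in H'. injection H'; intros; f_equal; auto.
Qed.

Lemma countable_sum T U : countable T -> countable U -> countable (T + U).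
Proof.
  intros [f Hf] [g Hg].
  exists (fun p => match p with inl a => Cantor.to_nat (0%nat, f a) | inr b => Cantor.to_nat (1%nat, g b) end).
  intros [a|a] [b|b] H; assert (H' := f_equal Cantor.of_nat H); cbv beta iota in H';
   rewrite !Cantor.cancel_of_to in H'; injection H'; intros; try discriminate; f_equal; auto.
Qed.

Fixpoint enc_list (f : nat -> nat) (l : list nat) : nat :=
  match l with nil => 0%nat | cons a l => S (Cantor.to_nat (f a, enc_list f l)) end.

Lemma countable_list : countable (list nat).
Proof.
  exists (enc_list (fun n => n)).
  induction x as [|a l IH]; destruct y as [|b m]; cbn [enc_list]; intro H; try discriminate; auto.
  apply eq_add_S in H; rename H into H'. assert (H'' := f_equal Cantor.of_nat H'); rewrite !Cantor.cancel_of_to in H''.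
  injection H''; intros; f_equal; auto.
Qed.

Lemma countable_bool : countable bool.
Proof. exists (fun b : bool => if b then 1%nat else 0%nat); intros [|] [|]; simpl; auto; discriminate. Qed.

Definition qD (p : nat * nat * nat) : R :=
  let '(a, b, n) := p in (INR a - INR b) / INR n.
Definition Rcode (x : R) : pset (nat * nat * nat) := fun p => qD p < x.

Lemma IZR_nats (z : Z) : exists a b, IZR z = INR a - INR b.
Proof.
  destruct (Z.le_gt_cases 0 z) as [H|H].
  - exists (Z.to_nat z), 0%nat. rewrite (INR_IZR_INZ (Z.to_nat z)), Z2Nat.id by lia. simpl; ring.
  - exists 0%nat, (Z.to_nat (- z)). rewrite (INR_IZR_INZ (Z.to_nat (- z))), Z2Nat.id by lia. rewrite opp_IZR. simpl; ring.
Qed.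

Lemma density (x y : R) : x < y -> exists p, x < qD p < y.
Proof.
  intro Hxy.
  destruct (INR_archimed (y - x) 1) as [n Hn]; [lra|].
  assert (Hm : 0 < INR n).
  { destruct (Rle_or_lt (INR n) 0) as [H|H]; auto. exfalso.
    nra. }
  destruct (archimed (x * INR n)) as [H1 H2].
  destruct (IZR_nats (up (x * INR n))) as [a [b Hab]].
  exists (a, b, n); simpl; rewrite <- Hab; split.
  - apply Rmult_lt_reg_r with (INR n); auto. unfold Rdiv; rewrite Rmult_assoc, Rinv_l by lra. lra.
  - apply Rmult_lt_reg_r with (INR n); auto. unfold Rdiv; rewrite Rmult_assoc, Rinv_l by lra. lra.
Qed.

Lemma Rcode_inj x y : Rcode x = Rcode y -> x = y.
Proof.
  intro H.
  destruct (Rtotal_order x y) as [Hl|[Heq|Hl]]; auto; exfalso.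
  - destruct (density _ _ Hl) as [p Hp].
    assert (E : Rcode x p <-> Rcode y p) by (rewrite H; tauto). unfold Rcode in E; lra.
  - destruct (density _ _ Hl) as [p Hp].
    assert (E : Rcode x p <-> Rcode y p) by (rewrite H; tauto). unfold Rcode in E; lra.
Qed.

Lemma countable_D : countable (nat * nat * nat).
Proof. repeat apply countable_prod; apply countable_nat. Qed.

From mathcomp Require ssreflect ssrfun ssrbool eqtype boolp wochoice.
Module WO.
Import ssreflect ssrfun ssrbool eqtype boolp wochoice.
Lemma wo_exists (T : Type) : exists W : T -> T -> Prop,
  well_founded W /\ (forall x y, W x y \/ x = y \/ W y x) /\ (forall x, ~ W x x).
Proof.
have [Rl Hwo] := well_ordering_principle (classicType T).
have refl : forall x : classicType T, Rl x x.
  move=> x.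
  have ne : nonempty (pred_of_simpl (pred1 x)) by exists x; rewrite !inE eqxx.
  case: (Hwo _ ne) => z [[Hz Hlb] Hu].
  move: Hz; rewrite !inE => /eqP Ezx; subst z.
  by apply: Hlb; rewrite !inE eqxx.
have two : forall x y : classicType T, exists z, (z = x \/ z = y) /\ Rl z x /\ Rl z y
   /\ forall z', (z' = x \/ z' = y) -> Rl z' x -> Rl z' y -> z = z'.
  move=> x y.
  have ne : nonempty (pred_of_simpl (pred2 x y)) by exists x; rewrite !inE eqxx.
  case: (Hwo _ ne) => z [[Hz Hlb] Hu].
  exists z; split; first by move: Hz; rewrite !inE => /orP[/eqP->|/eqP->]; auto.
  split; first by apply: Hlb; rewrite !inE eqxx.
  split; first by apply: Hlb; rewrite !inE eqxx orbT.
  move=> z' Hz' H1 H2; apply: Hu; split.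
    by case: Hz' => ->; rewrite !inE eqxx ?orbT.
  by move=> w; rewrite !inE => /orP[/eqP->|/eqP->].
exists (fun x y : T => Rl x y /\ x <> y).
split; last split.
- move=> a; apply: NNPP => Hna.
  pose A := (fun y : classicType T => `[< ~ Acc (fun x y : T => Rl x y /\ x <> y) y >]).
  have ne : nonempty (pred_of_simpl (SimplPred A)).
    by exists a; rewrite inE /A; apply/asboolP.
  case: (Hwo _ ne) => z [[Hz Hlb] _].
  move: Hz; rewrite inE /A => /asboolP; apply; constructor => y [Hyz Hne].
  apply: NNPP => Hy.
  have Hzy : Rl z y by apply: Hlb; rewrite inE /A; apply/asboolP.
  case: (two y z) => w [Hw [Hw1 [Hw2 Hu]]].
  apply: Hne.
  have e1 := Hu y (or_introl erefl) (refl y) Hyz.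
  have e2 := Hu z (or_intror erefl) Hzy (refl z).
  by rewrite -e1 -e2.
- move=> x y; case: (two x y) => w [Hw [Hw1 [Hw2 Hu]]].
  case: (Classical_Prop.classic (x = y)) => Hxy; first by auto.
  case: Hw => Hw; subst w; [left | right; right]; split; auto.
- by move=> x [_ H].
Qed.
End WO.

Lemma wf_min {T} (W : T -> T -> Prop) (P : T -> Prop) :
  well_founded W -> (exists x, P x) -> exists x, P x /\ forall y, W y x -> ~ P y.
Proof.
  intros Hwf [x Hx]. apply NNPP; intro Hn.
  assert (forall z, ~ P z). { intro z. induction z as [z IH] using (well_founded_ind Hwf).
    intro Hz. apply Hn. exists z; split; auto. }
  eapply H; eauto.
Qed.


Section Main.
Variables (X : Type) (d : X -> X -> R) (add : X -> X -> X) (opp : X -> X) (zero : X) (Ideal : pset (pset X)).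
Hypothesis Hgrp : abelian_polish_group d add opp zero.
Hypothesis Hunc : uncountable X.
Hypothesis Hprop : proper_ideal Ideal.
Hypothesis Hsig : sigma_ideal Ideal.
Hypothesis Hsing : contains_singletons Ideal.
Hypothesis Hbase : has_Borel_base d Ideal.
Hypothesis H8 : forall B, Borel d B -> ~ Ideal B -> forall D : pset (pset X),
     subset D Ideal -> card_lt D continuum ->
     card_eq (fun x => B x /\ ~ (exists A, D A /\ A x)) continuum.
Hypothesis HP : forall (T : Type) (K : pset T), card_lt K continuum -> card_le (powerset K) continuum.

Lemma Borel_full : Borel d (fun _ => True).
Proof. intros S HS _; exact (proj1 HS). Qed.

Lemma XR_eq : card_eq (fun x : X => True /\ ~ (exists A, (fun _ : pset X => False) A /\ A x)) continuum.
Proof.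
  apply H8. apply Borel_full. exact Hprop. intros A []. split.
  - exists (fun _ => 0); split; [intros x []|intros x y []].
  - intros [f [Hf _]]. exact (Hf 0 I).
Qed.

Lemma eX_ex : exists e : X -> R, forall x y, e x = e y -> x = y.
Proof.
  destruct XR_eq as [[f [_ Hf]] _]. exists f; intros x y H; apply Hf; auto.
  split; auto; intros [A [[] _]]. split; auto; intros [A [[] _]].
Qed.

Lemma rX_ex : exists r : R -> X, forall x y, r x = r y -> x = y.
Proof.
  destruct XR_eq as [_ [f [_ Hf]]]. exists f; intros x y H; apply Hf; auto; exact I.
Qed.

Lemma R_uncount : ~ countable R.
Proof.
  intros [g Hg]. destruct eX_ex as [e He]. apply Hunc. exists (fun x => g (e x)); auto.
Qed.

Lemma small_countable T : countable T -> forall A : pset T, small A.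
Proof.
  intros [g Hg] A; split.
  - exists (fun x => INR (g x)); split; [intros; exact I|]. intros x y _ _ H; apply INR_eq in H; auto.
  - intros [f [_ Hf]]. apply R_uncount. exists (fun x => g (f x)). intros x y H. apply Hf; auto; exact I.
Qed.

Lemma pset_inj T : countable T -> exists F : pset T -> R, forall A B, F A = F B -> A = B.
Proof.
  intro Hc. destruct (HP T (full T) (small_countable T Hc (full T))) as [F [_ HF]].
  exists F; intros A B H; apply HF; auto; intros x _; exact I.
Qed.

Lemma pair_ex : exists pr : R -> R -> R, forall a b a' b', pr a b = pr a' b' -> a = a' /\ b = b'.
Proof.
  destruct (pset_inj _ (countable_sum _ _ countable_D countable_D)) as [F HF].
  exists (fun a b => F (fun z => match z with inl p => Rcode a p | inr p => Rcode b p end)).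
  intros a b a' b' H. apply HF in H. split; apply Rcode_inj; apply functional_extensionality; intro p.
  - exact (f_equal (fun G => G (inl p)) H).
  - exact (f_equal (fun G => G (inr p)) H).
Qed.

Lemma small_le {T U} (A : pset T) (B : pset U) : card_le A B -> small B -> small A.
Proof. apply clt_le_trans. Qed.

Lemma CoverGen (Y : Type) (S : pset Y) (V : Y -> pset R) :
  small (fun p : Y * (nat * nat * nat) => S (fst p)) ->
  (forall y, S y -> small (V y)) -> ~ (forall r, exists y, S y /\ V y r).
Proof.
  intros HK HV Hcov.
  destruct (HP _ _ HK) as [Fk [_ HFk]].
  set (code := fun (phi : Y -> R) (p : Y * (nat*nat*nat)) => S (fst p) /\ Rcode (phi (fst p)) (snd p)).
  set (Enc := fun phi => Fk (code phi)).
  assert (Hsub : forall phi, powerset (fun p : Y * (nat*nat*nat) => S (fst p)) (code phi)).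
  { intros phi p [H _]; exact H. }
  assert (Hval : forall phi psi y, S y -> Enc phi = Enc psi -> phi y = psi y).
  { intros phi psi y Hy HE. apply HFk in HE; auto. apply Rcode_inj.
    apply pset_ext; intro p.
    assert (E := f_equal (fun G => G (y, p)) HE). simpl in E. unfold code in E. simpl in E.
    split; intro H. assert (HH : S y /\ Rcode (phi y) p) by auto. rewrite E in HH; tauto.
    assert (HH : S y /\ Rcode (psi y) p) by auto. rewrite <- E in HH; tauto. }
  set (Val := fun y v => exists phi, V y (Enc phi) /\ phi y = v).
  assert (Hnot : forall y, S y -> exists v, ~ Val y v).
  { intros y Hy. apply NNPP; intro Hall.
    assert (Hall' : forall v, Val y v) by (intro v; apply NNPP; intro Hn; apply Hall; exists v; auto).
    destruct (choice (fun v phi => V y (Enc phi) /\ phi y = v) Hall') as [ph Hph].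
    apply (HV y Hy). exists (fun v => Enc (ph v)); split.
    - intros v _; apply Hph.
    - intros v w _ _ HE. destruct (Hph v) as [_ E1]; destruct (Hph w) as [_ E2].
      rewrite <- E1, <- E2. apply Hval; auto. }
  destruct (choice_on 0 S (fun y v => ~ Val y v) Hnot) as [h Hh].
  destruct (Hcov (Enc h)) as [y [Hy HVy]].
  apply (Hh y Hy). exists h; auto.
Qed.

Lemma CoverCount (Y : Type) (S : pset Y) (V : Y -> pset R) :
  countable Y -> (forall y, S y -> small (V y)) -> ~ (forall r, exists y, S y /\ V y r).
Proof.
  intros HY. apply CoverGen. apply small_countable. apply countable_prod; auto. apply countable_D.
Qed.

Lemma prod_small (Y : Type) (S : pset Y) : small S -> small (fun p : Y * (nat * nat * nat) => S (fst p)).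
Proof.
  intros HS. assert (HS' := HS). destruct HS' as [[g [_ Hg]] HS2]. destruct pair_ex as [pr Hpr].
  destruct countable_D as [cD HcD].
  split.
  - exists (fun p => pr (g (fst p)) (INR (cD (snd p)))). split; [intros; exact I|].
    intros [a b] [a' b'] Ha Hb H. apply Hpr in H. destruct H as [H1 H2]. simpl in *.
    apply INR_eq in H2. f_equal; auto.
  - intros [j [Hj1 Hj2]].
    apply (CoverCount (nat*nat*nat) (full _) (fun q r => snd (j r) = q) countable_D).
    + intros q _. apply (small_le _ S); auto. exists (fun r => fst (j r)). split.
      * intros r _; apply (Hj1 r I).
      * intros r r' Hr Hr' E. apply Hj2; try exact I.
        apply injective_projections; congruence.
    + intro r. exists (snd (j r)); split; auto; exact I.
Qed.

Lemma CoverR (Y : Type) (S : pset Y) (V : Y -> pset R) :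
  small S -> (forall y, S y -> small (V y)) -> ~ (forall r, exists y, S y /\ V y r).
Proof. intro HS; apply CoverGen, prod_small, HS. Qed.

Lemma small_empty {T} (A : pset T) : (forall x, ~ A x) -> small A.
Proof.
  intro H; split.
  - exists (fun _ => 0); split; intros; exfalso; eapply H; eauto.
  - intros [f [Hf _]]; apply (H (f 0)); apply Hf; exact I.
Qed.

Lemma union_small (Y T : Type) (S : pset Y) (U : Y -> pset T) :
  small S -> (forall y, S y -> small (U y)) -> small (fun t => exists y, S y /\ U y t).
Proof.
  intros HS HU.
  destruct (classic (exists t y, S y /\ U y t)) as [[t0 [y0 _]]|Hne].
  2:{ apply small_empty; intros t Ht; apply Hne; exists t; auto. }
  split.
  - destruct pair_ex as [pr Hpr]. destruct HS as [[g [_ Hg]] _].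
    destruct (choice_on y0 (fun t => exists y, S y /\ U y t) (fun t y => S y /\ U y t)) as [yt Hyt]; auto.
    destruct (choice_on (fun _ : T => 0) S (fun y (f : T -> R) => forall a b, U y a -> U y b -> f a = f b -> a = b)) as [io Hio].
    { intros y Hy. destruct (HU y Hy) as [[f [_ Hf]] _]. exists f; auto. }
    exists (fun t => pr (g (yt t)) (io (yt t) t)). split; [intros; exact I|].
    intros a b Ha Hb E. apply Hpr in E. destruct E as [E1 E2].
    destruct (Hyt a Ha) as [Sa Ua]; destruct (Hyt b Hb) as [Sb Ub].
    apply Hg in E1; auto. rewrite <- E1 in Ub, E2. apply (Hio (yt a)); auto.
  - intros [j [Hj1 Hj2]].
    apply (CoverR Y S (fun y r => U y (j r)) HS).
    + intros y Hy. apply (small_le _ (U y)); auto. exists j; split; auto.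
      intros a b _ _ E; apply Hj2; auto; exact I.
    + intro r. destruct (Hj1 r I) as [y Hy]. exists y; auto.
Qed.

Lemma small_union2 {T} (A B : pset T) : small A -> small B -> small (fun x => A x \/ B x).
Proof.
  intros HA HB.
  apply (small_le _ (fun t => exists b : bool, full bool b /\ (if b then A else B) t)).
  - apply cle_sub. intros x [H|H]; [exists true|exists false]; split; auto; exact I.
  - apply union_small. apply small_countable, countable_bool. intros [|] _; auto.
Qed.

Lemma small_single {T} (x : T) : small (fun y => y = x).
Proof.
  split.
  - exists (fun _ => 0); split; [intros; exact I|]. intros a b Ha Hb _; congruence.
  - intros [f [Hf1 Hf2]]. assert (E : 0 = 1).
    { apply Hf2. exact I. exact I. rewrite (Hf1 0 I). symmetry. apply (Hf1 1 I). }
    lra.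
Qed.

Lemma X_not_small : ~ small (full X).
Proof.
  intros [_ H]. apply H. destruct rX_ex as [r Hr]. exists r; split; [intros; exact I|]. intros; auto.
Qed.

Lemma good_wo : exists W : R -> R -> Prop, well_founded W /\ (forall x y, W x y \/ x = y \/ W y x)
  /\ (forall x, ~ W x x) /\ (forall x, small (fun y => W y x)).
Proof.
  destruct (WO.wo_exists R) as [W0 [Hwf [Htot Hirr]]].
  destruct (classic (exists x, card_le continuum (fun y => W0 y x))) as [Hex|Hnex].
  - destruct (wf_min _ _ Hwf Hex) as [x0 [[g [Hg1 Hg2]] Hmin]].
    exists (fun a b => W0 (g a) (g b)). split; [|split; [|split]].
    + apply (wf_inverse_image _ _ W0 g Hwf).
    + intros a b. destruct (Htot (g a) (g b)) as [H|[H|H]]; auto.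
      right; left; apply Hg2; auto; exact I.
    + intro x; apply Hirr.
    + intro b; split.
      * apply cle_sub; intros y _; exact I.
      * intros [f [Hf1 Hf2]]. apply (Hmin (g b) (Hg1 b I)).
        exists (fun x => g (f x)). split; [intros x _; apply Hf1, I|].
        intros x y _ _ E. apply Hf2; try exact I. apply Hg2; auto; exact I.
  - exists W0. split; [|split; [|split]]; auto.
    intro b; split. apply cle_sub; intros y _; exact I.
    intro H; apply Hnex; exists b; auto.
Qed.

Lemma bounded (W : R -> R -> Prop) : (forall x y, W x y \/ x = y \/ W y x) -> (forall x, small (fun y => W y x)) ->
  forall S : pset R, small S -> exists b, forall s, S s -> W s b.
Proof.
  intros Htot Hseg S HS. apply NNPP; intro Hn.
  apply (CoverR R S (fun s r => W r s \/ r = s) HS).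
  - intros s _. apply small_union2; auto. apply small_single.
  - intro r. apply NNPP; intro Hn2. apply Hn. exists r. intros s Hs.
    destruct (Htot s r) as [H|[H|H]]; auto; exfalso; apply Hn2; exists s; split; auto.
Qed.



Lemma g_assoc x y z : add x (add y z) = add (add x y) z.
Proof. destruct Hgrp as [[H _] _]; apply H. Qed.
Lemma g_comm x y : add x y = add y x.
Proof. destruct Hgrp as [[_ [H _]] _]; apply H. Qed.
Lemma g_zero x : add zero x = x.
Proof. destruct Hgrp as [[_ [_ [H _]]] _]; apply H. Qed.
Lemma g_opp x : add (opp x) x = zero.
Proof. destruct Hgrp as [[_ [_ [_ H]]] _]; apply H. Qed.
Lemma g_oppr x : add x (opp x) = zero.
Proof. rewrite g_comm; apply g_opp. Qed.
Lemma g_addK a t : add (add a t) (opp t) = a.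
Proof. rewrite <- g_assoc, g_oppr, g_comm, g_zero; auto. Qed.
Lemma g_addKr a t : add (add a (opp t)) t = a.
Proof. rewrite <- g_assoc, g_opp, g_comm, g_zero; auto. Qed.
Lemma g_cancel a b t : add a t = add b t -> a = b.
Proof. intro H. rewrite <- (g_addK a t), <- (g_addK b t), H; auto. Qed.

Lemma m_sym x y : d x y = d y x.
Proof. destruct Hgrp as [_ [[_ [_ [H _]]] _]]; apply H. Qed.
Lemma m_tri x y z : d x z <= d x y + d y z.
Proof. destruct Hgrp as [_ [[_ [_ [_ H]]] _]]; apply H. Qed.
Lemma m_sep : separable d.
Proof. destruct Hgrp as [_ [_ [_ [H _]]]]; exact H. Qed.

Definition D0 : nat -> X := proj1_sig (constructive_indefinite_description _ m_sep).
Lemma D0_dense x eps : 0 < eps -> exists n, d x (D0 n) < eps.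
Proof. apply (proj2_sig (constructive_indefinite_description _ m_sep)). Qed.

Lemma Borel_open U : d_open d U -> Borel d U.
Proof. intros HU S HS HO; auto. Qed.
Lemma Borel_compl A : Borel d A -> Borel d (fun x => ~ A x).
Proof. intros HA S HS HO. apply (proj1 (proj2 HS)). apply HA; auto. Qed.
Lemma Borel_union (A : nat -> pset X) : (forall n, Borel d (A n)) -> Borel d (fun x => exists n, A n x).
Proof. intros HA S HS HO. apply (proj2 (proj2 HS)). intro n; apply HA; auto. Qed.
Lemma Borel_ext A B : Borel d A -> (forall x, A x <-> B x) -> Borel d B.
Proof. intros HA HE. rewrite <- (pset_ext A B HE); auto. Qed.
Lemma Borel_diff A C : Borel d A -> Borel d C -> Borel d (fun x => A x /\ ~ C x).
Proof.
  intros HA HC.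
  apply (Borel_ext (fun x => ~ (exists n : nat, (match n with O => fun y => ~ A y | _ => C end) x))).
  - apply Borel_compl, Borel_union. intros [|n]; auto. apply Borel_compl; auto.
  - intro x; split.
    + intro H; split.
      * apply NNPP; intro H'; apply H; exists O; auto.
      * intro H'; apply H; exists 1%nat; auto.
    + intros [H1 H2] [[|n] Hn]; auto.
Qed.

Inductive code : Type := CBall (k j : nat) | CComp (c : code) | CUn (f : nat -> code).

Fixpoint interp (c : code) : pset X :=
  match c with
  | CBall k j => fun y => d (D0 k) y < / INR (S j)
  | CComp c' => fun y => ~ interp c' y
  | CUn f => fun y => exists n, interp (f n) y
  end.

Lemma interp_Borel c : Borel d (interp c).
Proof.
  induction c as [k j|c IH|f IH]; cbn [interp].
  - apply Borel_open. intros y Hy. cbv beta in Hy |- *. exists (/ INR (S j) - d (D0 k) y); split; [lra|].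
    intros z Hz. cbv beta. pose proof (m_tri (D0 k) y z). lra.
  - apply Borel_compl; auto.
  - apply Borel_union; auto.
Qed.

Definition cwhole : code := CUn (fun k => CBall k 0).
Lemma cwhole_all x : interp cwhole x.
Proof.
  simpl. destruct (D0_dense x 1) as [n Hn]; [lra|]. exists n. rewrite m_sym. simpl. lra.
Qed.
Definition cempty : code := CComp cwhole.
Lemma cempty_none x : ~ interp cempty x.
Proof. simpl. intro H; apply H, cwhole_all. Qed.

Definition ball_code (U : pset X) (n : nat) : code :=
  let '(k, j) := Cantor.of_nat n in
  if excluded_middle_informative (forall y, interp (CBall k j) y -> U y) then CBall k j else cempty.

Lemma open_coded U : d_open d U -> forall x, U x <-> interp (CUn (ball_code U)) x.
Proof.
  intros HU x; split.
  - intro Hx. destruct (HU x Hx) as [eps [Heps Hball]].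
    destruct (INR_archimed (eps / 2) 1) as [j Hj]; [lra|].
    assert (Hj' : / INR (S j) < eps / 2).
    { rewrite S_INR. assert (0 <= INR j) by apply pos_INR.
      apply (Rmult_lt_reg_l (INR j + 1)); [lra|]. rewrite Rinv_r by lra. nra. }
    assert (Hpos : 0 < / INR (S j)) by (apply Rinv_0_lt_compat, lt_0_INR; lia).
    destruct (D0_dense x _ Hpos) as [k Hk].
    exists (Cantor.to_nat (k, j)). unfold ball_code. rewrite Cantor.cancel_of_to.
    destruct (excluded_middle_informative _) as [Hin|Hnin].
    + cbn [interp]. rewrite m_sym; auto.
    + exfalso; apply Hnin. intros y Hy. cbn [interp] in Hy. apply Hball.
      pose proof (m_tri x (D0 k) y). lra.
  - intros [n Hn]. unfold ball_code in Hn. destruct (Cantor.of_nat n) as [k j].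
    destruct (excluded_middle_informative _) as [Hin|Hnin]; auto.
    exfalso; eapply cempty_none; eauto.
Qed.

Lemma Borel_coded A : Borel d A -> exists c, forall x, A x <-> interp c x.
Proof.
  intro HA. apply (HA (fun B => exists c, forall x, B x <-> interp c x)).
  - split; [|split].
    + exists cwhole; intro x; split; auto; intros _; apply cwhole_all.
    + intros B [c Hc]. exists (CComp c); intro x; simpl; rewrite Hc; tauto.
    + intros B HB. destruct (choice _ HB) as [f Hf]. exists (CUn f); intro x; simpl.
      split; intros [n Hn]; exists n; apply Hf; auto.
  - intros U HU. exists (CUn (ball_code U)). apply open_coded; auto.
Qed.

Fixpoint flat (c : code) (s : list nat) : nat :=
  match c with
  | CBall k j => match s with nil => 1%nat | cons O nil => k | cons (S _) nil => j | _ => 0%nat end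
  | CComp c' => match s with nil => 2%nat | cons _ s' => flat c' s' end
  | CUn f => match s with nil => 3%nat | cons n s' => flat (f n) s' end
  end.

Lemma flat_inj c1 c2 : (forall s, flat c1 s = flat c2 s) -> c1 = c2.
Proof.
  revert c2. induction c1 as [k j|c IH|f IH]; intros [k' j'|c'|f'] H;
    try (specialize (H nil); simpl in H; discriminate).
  - f_equal. apply (H (cons O nil)). apply (H (cons 1%nat nil)).
  - f_equal. apply IH. intro s; apply (H (cons O s)).
  - f_equal. apply functional_extensionality; intro n. apply IH. intro s; apply (H (cons n s)).
Qed.

Lemma code_inj : exists Fc : code -> R, forall a b, Fc a = Fc b -> a = b.
Proof.
  destruct (pset_inj (list nat * nat) (countable_prod _ _ countable_list countable_nat)) as [F HF].
  exists (fun c => F (fun p => flat c (fst p) = snd p)). intros a b E. apply HF in E.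
  apply flat_inj. intro s.
  assert (E' := f_equal (fun G => G (s, flat a s)) E). simpl in E'.
  symmetry. rewrite <- E'. auto.
Qed.


Definition cid {A} {P : A -> Prop} (H : exists x, P x) : A := proj1_sig (constructive_indefinite_description P H).
Lemma cid_spec {A} {P : A -> Prop} (H : exists x, P x) : P (cid H).
Proof. unfold cid; apply proj2_sig. Qed.

Definition W : R -> R -> Prop := cid good_wo.
Lemma W_wf : well_founded W.
Proof. apply (cid_spec good_wo). Qed.
Lemma W_tot x y : W x y \/ x = y \/ W y x.
Proof. apply (cid_spec good_wo). Qed.
Lemma W_seg x : small (fun y => W y x).
Proof. apply (cid_spec good_wo). Qed.

Definition eX : X -> R := cid eX_ex.
Lemma eX_inj x y : eX x = eX y -> x = y.
Proof. apply (cid_spec eX_ex). Qed.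
Definition Fc : code -> R := cid code_inj.
Lemma Fc_inj a b : Fc a = Fc b -> a = b.
Proof. apply (cid_spec code_inj). Qed.
Definition pr : R -> R -> R := cid pair_ex.
Lemma pr_inj a b a' b' : pr a b = pr a' b' -> a = a' /\ b = b'.
Proof. apply (cid_spec pair_ex). Qed.

Lemma h_ex : exists h, h <> zero.
Proof.
  apply NNPP; intro Hn. apply Hunc. exists (fun _ => 0%nat). intros x y _.
  transitivity zero; [|symmetry]; apply NNPP; intro H; apply Hn; eauto.
Qed.
Definition h : X := cid h_ex.
Lemma h_nz : h <> zero.
Proof. apply (cid_spec h_ex). Qed.

Definition img (G : pset X) : pset R := fun r => exists g, G g /\ r = eX g.

Lemma small_img G : small G -> small (img G).
Proof.
  intros [HG1 HG2]. split.
  - apply cle_sub; intros r _; exact I.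
  - intros [f [Hf1 Hf2]]. apply HG2.
    destruct (choice_on zero (fun r : R => True) (fun r g => G g /\ f r = eX g)) as [pre Hpre].
    { intros r _. apply (Hf1 r I). }
    exists (fun r => pre r). split.
    + intros r _; apply (Hpre r I).
    + intros a b _ _ E. apply Hf2; try exact I.
      rewrite (proj2 (Hpre a I)), (proj2 (Hpre b I)), E; auto.
Qed.

Definition beta (G : pset X) : R := epsilon (inhabits 0) (fun b => forall r, img G r -> W r b).
Lemma beta_spec G : small G -> forall r, img G r -> W r (beta G).
Proof.
  intro HG. apply (epsilon_spec (inhabits 0) (fun b => forall r, img G r -> W r b)).
  apply (bounded W W_tot W_seg), small_img, HG.
Qed.

Definition iota (b : R) : pset R -> R :=
  epsilon (inhabits (fun _ => 0)) (fun f => forall A B, subset A (fun y => W y b) -> subset B (fun y => W y b) -> f A = f B -> A = B).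
Lemma iota_spec b A B : subset A (fun y => W y b) -> subset B (fun y => W y b) -> iota b A = iota b B -> A = B.
Proof.
  revert A B. apply (epsilon_spec (inhabits (fun _ => 0))
    (fun f => forall A B, subset A (fun y => W y b) -> subset B (fun y => W y b) -> f A = f B -> A = B)).
  destruct (HP _ _ (W_seg b)) as [f [_ Hf]]. exists f; auto.
Qed.

Inductive task : Type := TB (xi : R) (c : code) | TS (G : pset X).
Definition valid (t : task) : Prop := match t with TB _ _ => True | TS G => small G end.
Definition enc (t : task) : R :=
  match t with
  | TB xi c => pr 0 (pr xi (Fc c))
  | TS G => pr 1 (pr (beta G) (iota (beta G) (img G)))
  end.

Lemma enc_inj a b : valid a -> valid b -> enc a = enc b -> a = b.
Proof.
  intros Ha Hb. destruct a as [xi c|G]; destruct b as [xi' c'|G']; simpl; intro E;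
    apply pr_inj in E; destruct E as [E1 E2]; try lra.
  - apply pr_inj in E2; destruct E2 as [E2 E3]. apply Fc_inj in E3. subst; auto.
  - apply pr_inj in E2; destruct E2 as [E2 E3]. simpl in Ha, Hb.
    rewrite <- E2 in E3. apply iota_spec in E3.
    + f_equal. apply pset_ext; intro g; split; intro Hg.
      * assert (Hi : img G (eX g)) by (exists g; auto). rewrite E3 in Hi.
        destruct Hi as [g' [Hg' Eg]]. apply eX_inj in Eg; subst; auto.
      * assert (Hi : img G' (eX g)) by (exists g; auto). rewrite <- E3 in Hi.
        destruct Hi as [g' [Hg' Eg]]. apply eX_inj in Eg; subst; auto.
    + intros r Hr; apply beta_spec; auto.
    + intros r Hr; rewrite E2; apply beta_spec; auto.
Qed.

Definition tk (a : R) : task := epsilon (inhabits (TB 0 cempty)) (fun t => valid t /\ enc t = a).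
Lemma tk_enc t : valid t -> tk (enc t) = t.
Proof.
  intro Ht. assert (H := epsilon_spec (inhabits (TB 0 cempty)) (fun t' => valid t' /\ enc t' = enc t)).
  destruct H as [H1 H2]; [exists t; auto|]. apply enc_inj; auto.
Qed.

Definition Col := X -> option R.
Definition Used (prev : R -> Col) (a : R) (x : X) : Prop := exists b, W b a /\ prev b x <> None.
Definition Forb (prev : R -> Col) (a : R) (x : X) : Prop :=
  Used prev a x \/ Used prev a (add x (opp h)) \/ Used prev a (add x h).
Definition Good (a : R) (prev : R -> Col) (f : Col) : Prop :=
  (forall x, f x <> None -> ~ Forb prev a x) /\
  (forall x y c, f x = Some c -> f y = Some c -> x = y) /\
  small (fun x => f x <> None) /\
  match tk a with
  | TB xi c => ~ Ideal (interp c) -> exists x, interp c x /\ f x = Some xi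
  | TS G => small G -> exists t, forall g, G g -> f (add g t) <> None
  end.

Definition Phi (a : R) (prev : R -> Col) : Col := epsilon (inhabits (fun _ => None)) (Good a prev).

Lemma none_good a prev : (match tk a with
  | TB xi c => ~ Ideal (interp c) -> exists x, interp c x /\ (fun _ : X => @None R) x = Some xi
  | TS G => small G -> exists t, forall g, G g -> (fun _ : X => @None R) (add g t) <> None
  end) -> Good a prev (fun _ => None).
Proof.
  intro H; split; [|split; [|split]].
  - intros x0 Hx; exfalso; auto.
  - intros x0 y c Hx; discriminate.
  - apply small_empty; auto.
  - exact H.
Qed.

Lemma good_exists a prev : (forall b, W b a -> small (fun x => prev b x <> None)) -> exists f, Good a prev f.
Proof.
  intro Hprev.
  assert (HU : small (Used prev a)) by (apply union_small; [apply W_seg|auto]).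
  assert (HF : small (Forb prev a)).
  { apply small_union2; auto. apply small_union2.
    - apply (small_le _ (Used prev a)); auto. exists (fun x => add x (opp h)); split; auto.
      intros x y _ _ E; eapply g_cancel; eauto.
    - apply (small_le _ (Used prev a)); auto. exists (fun x => add x h); split; auto.
      intros x y _ _ E; eapply g_cancel; eauto. }
  destruct (tk a) as [xi c|G] eqn:Etk.
  - destruct (classic (Ideal (interp c))) as [Hi|Hi].
    + exists (fun _ => None). apply none_good. rewrite Etk. tauto.
    + set (Dset := fun A : pset X => exists y, Forb prev a y /\ A = (fun z => z = y)).
      assert (HD1 : subset Dset Ideal). { intros A [y [_ E]]; subst; apply Hsing. }
      assert (HD2 : small Dset).
      { apply (small_le _ (Forb prev a)); auto.
        destruct (choice_on zero Dset (fun A y => Forb prev a y /\ A = (fun z => z = y))) as [sel Hsel]; auto.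
        exists sel; split. intros A HA; apply (Hsel A HA).
        intros A B HA HB E. rewrite (proj2 (Hsel A HA)), (proj2 (Hsel B HB)), E; auto. }
      destruct (H8 (interp c) (interp_Borel c) Hi Dset HD1 HD2) as [_ [f0 [Hf0 _]]].
      destruct (Hf0 0 I) as [Hx0 Hx1]. set (x0 := f0 0) in *.
      assert (Hx2 : ~ Forb prev a x0).
      { intro Hfb; apply Hx1. exists (fun z => z = x0); split; auto. exists x0; auto. }
      exists (fun y => if excluded_middle_informative (y = x0) then Some xi else None).
      split; [|split; [|split]].
      * intros x Hx. destruct (excluded_middle_informative (x = x0)); [subst; auto|tauto].
      * intros x y c' Hx Hy. destruct (excluded_middle_informative (x = x0));
          destruct (excluded_middle_informative (y = x0)); try discriminate; congruence.
      * apply (small_le _ (fun y => y = x0)). apply cle_sub. intros y Hy.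
        destruct (excluded_middle_informative (y = x0)); tauto. apply small_single.
      * rewrite Etk. intros _. exists x0; split; auto.
        destruct (excluded_middle_informative (x0 = x0)); tauto.
  - destruct (classic (small G)) as [HG|HG].
    + set (Bad := fun t => exists g, G g /\ Forb prev a (add g t)).
      assert (HB : small Bad).
      { apply union_small; auto. intros g _. apply (small_le _ (Forb prev a)); auto.
        exists (fun t => add g t); split; auto. intros x y _ _ E.
        rewrite (g_comm g x), (g_comm g y) in E; eapply g_cancel; eauto. }
      assert (Ht : exists t, ~ Bad t).
      { apply NNPP; intro Hn. apply X_not_small. apply (small_le _ Bad); auto.
        apply cle_sub; intros t _. apply NNPP; intro Hb; apply Hn; eauto. }
      destruct Ht as [t Ht].
      exists (fun y => if excluded_middle_informative (exists g, G g /\ y = add g t) then Some (eX y) else None).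
      split; [|split; [|split]].
      * intros x Hx. destruct (excluded_middle_informative _) as [[g [Hg E]]|]; [|tauto].
        subst x. intro Hf; apply Ht; exists g; auto.
      * intros x y c' Hx Hy. destruct (excluded_middle_informative (exists g, G g /\ x = add g t));
          destruct (excluded_middle_informative (exists g, G g /\ y = add g t)); try discriminate.
        apply eX_inj; congruence.
      * apply (small_le _ G); auto. exists (fun y => add y (opp t)); split.
        -- intros y Hy. destruct (excluded_middle_informative _) as [[g [Hg E]]|]; [|tauto].
           subst y; rewrite g_addK; auto.
        -- intros x y _ _ E; eapply g_cancel; eauto.
      * rewrite Etk. intros _. exists t. intros g Hg.
        destruct (excluded_middle_informative _) as [|Hn]; [discriminate|].
        exfalso; apply Hn; eauto.
    + exists (fun _ => None). apply none_good. rewrite Etk. tauto.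
Qed.

Definition restrict (a : R) (rec : forall b, W b a -> Col) : R -> Col :=
  fun b => match excluded_middle_informative (W b a) with left p => rec b p | right _ => fun _ => None end.

Definition st : R -> Col := Fix W_wf (fun _ => Col) (fun a rec => Phi a (restrict a rec)).

Definition rst (a : R) : R -> Col :=
  fun b => match excluded_middle_informative (W b a) with left _ => st b | right _ => fun _ => None end.

Lemma st_eq a : st a = Phi a (rst a).
Proof.
  unfold st. rewrite Fix_eq. reflexivity.
  intros x f g Hfg. f_equal. unfold restrict. apply functional_extensionality; intro b.
  destruct (excluded_middle_informative (W b x)); auto.
Qed.

Lemma rst_W a b : W b a -> rst a b = st b.
Proof. intro H; unfold rst; destruct (excluded_middle_informative (W b a)); tauto. Qed.

Lemma st_good a : Good a (rst a) (st a).
Proof.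
  induction a as [a IH] using (well_founded_ind W_wf).
  rewrite st_eq. unfold Phi. apply epsilon_spec. apply good_exists.
  intros b Hb. rewrite rst_W by auto. destruct (IH b Hb) as [_ [_ [H _]]]. rewrite st_eq in H. rewrite <- st_eq in H.
  exact H.
Qed.


Definition Bs (xi : R) : pset X := fun x => exists a, st a x = Some xi.

Lemma colored_unique a a' x c c' : st a x = Some c -> st a' x = Some c' -> a = a' /\ c = c'.
Proof.
  intros H1 H2. destruct (W_tot a a') as [Hw|[E|Hw]].
  - exfalso. destruct (st_good a') as [G1 _]. apply (G1 x); [congruence|].
    left. exists a; split; auto. rewrite rst_W by auto. congruence.
  - subst; split; congruence.
  - exfalso. destruct (st_good a) as [G1 _]. apply (G1 x); [congruence|].
    left. exists a'; split; auto. rewrite rst_W by auto. congruence.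
Qed.

Lemma Bs_disj xi eta x : Bs xi x -> Bs eta x -> xi = eta.
Proof. intros [a Ha] [b Hb]. apply (colored_unique _ _ _ _ _ Ha Hb). Qed.

Lemma no_hpair a a' p c : st a p = Some c -> st a' (add p h) = Some c -> False.
Proof.
  intros H1 H2. destruct (W_tot a a') as [Hw|[E|Hw]].
  - destruct (st_good a') as [G1 _]. apply (G1 (add p h)); [congruence|].
    right; left. rewrite g_addK. exists a; split; auto. rewrite rst_W by auto. congruence.
  - subst. destruct (st_good a') as [_ [G2 _]]. assert (E := G2 _ _ _ H1 H2).
    apply h_nz. apply (g_cancel _ _ p). rewrite g_zero, g_comm; auto.
  - destruct (st_good a) as [G1 _]. apply (G1 p); [congruence|].
    right; right. exists a'; split; auto. rewrite rst_W by auto. congruence.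
Qed.

Lemma hit xi c : ~ Ideal (interp c) -> exists x, interp c x /\ Bs xi x.
Proof.
  intro Hi. destruct (st_good (enc (TB xi c))) as [_ [_ [_ G4]]].
  rewrite tk_enc in G4 by exact I. destruct (G4 Hi) as [x [Hx1 Hx2]]. exists x; split; auto.
  exists (enc (TB xi c)); auto.
Qed.

Lemma ideal_union2 A B : Ideal A -> Ideal B -> Ideal (fun x => A x \/ B x).
Proof.
  intros HA HB. destruct Hsig as [Hs Hu].
  apply (Hs _ (fun x => exists n : nat, (match n with O => A | _ => B end) x)).
  - intros x [H|H]; [exists O|exists 1%nat]; auto.
  - apply Hu. intros [|n]; auto.
Qed.

Lemma meet_gen A (N : pset X) xi : (forall x, Bs xi x -> N x) -> Borel d A -> ~ Ideal A ->
  ~ Ideal (fun x => A x /\ N x).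
Proof.
  intros HN HA HnA HI. destruct (Hbase _ HI) as [C [HC [HsubC HIC]]].
  assert (HA' : Borel d (fun x => A x /\ ~ C x)) by (apply Borel_diff; auto).
  assert (HnA' : ~ Ideal (fun x => A x /\ ~ C x)).
  { intro H. apply HnA. apply (proj1 Hsig A (fun y => (A y /\ ~ C y) \/ C y)).
    - intros x Hx. destruct (classic (C x)); tauto.
    - apply ideal_union2; auto. }
  destruct (Borel_coded _ HA') as [c Hc].
  assert (Ec : interp c = (fun x => A x /\ ~ C x)) by (apply pset_ext; intro x; rewrite Hc; tauto).
  rewrite <- Ec in HnA'. destruct (hit xi c HnA') as [x [Hx1 Hx2]].
  rewrite Ec in Hx1. destruct Hx1 as [HAx HCx]. apply HCx, HsubC. split; auto.
Qed.

Lemma main_result : exists Bs : R -> pset X,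
    (forall xi eta, xi <> eta -> forall x, Bs xi x -> Bs eta x -> False) /\
    (forall xi, completely_nonmeasurable d Ideal (Bs xi)) /\
    (forall xi, ~ two_covering add (Bs xi)) /\
    lt_S_covering add continuum (range Bs).
Proof.
  exists Bs. split; [|split; [|split]].
  - intros xi eta Hne x H1 H2. apply Hne. eapply Bs_disj; eauto.
  - intros xi A HA HnA. split.
    + apply (meet_gen A (Bs xi) xi); auto.
    + apply (meet_gen A (fun x => ~ Bs xi x) (xi + 1)); auto.
      intros x H1 H2. assert (E := Bs_disj _ _ _ H1 H2). lra.
  - intros xi Hcov.
    destruct (Hcov (fun x => x = zero \/ x = h)) as [x Hx].
    + exists zero, h. split. intro E; apply h_nz; auto. tauto.
    + assert (Hp : Bs xi (add zero x)) by (apply Hx; exists zero; auto).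
      assert (Hq : Bs xi (add h x)) by (apply Hx; exists h; auto).
      destruct Hp as [a Ha]; destruct Hq as [b Hb].
      apply (no_hpair a b (add zero x) xi Ha).
      rewrite g_zero, g_comm; auto.
  - split.
    + intros A B [xi E1] [eta E2] Hne x H1 H2. subst. apply Hne.
      rewrite (Bs_disj _ _ _ H1 H2); auto.
    + intros G HG.
      destruct (st_good (enc (TS G))) as [_ [G2 [_ G4]]].
      rewrite tk_enc in G4 by exact HG. destruct (G4 HG) as [t Ht].
      exists t. split.
      * intros y [g [Hg E]]. subst y. destruct (st (enc (TS G)) (add g t)) as [c|] eqn:Ec.
        -- exists (Bs c); split; [exists c; auto|]. exists (enc (TS G)); auto.
        -- exfalso; eapply Ht; eauto.
      * intros A [xi EA] u v [g [Hg Eu]] Hu [g' [Hg' Ev]] Hv. subst A.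
        destruct Hu as [a Ha]; destruct Hv as [b Hb].
        destruct (st (enc (TS G)) u) as [cu|] eqn:Ecu; [|exfalso; subst u; exact (Ht g Hg Ecu)].
        destruct (st (enc (TS G)) v) as [cv|] eqn:Ecv; [|exfalso; subst v; exact (Ht g' Hg' Ecv)].
        destruct (colored_unique _ _ _ _ _ Ha Ecu) as [Ea1 Ea2].
        destruct (colored_unique _ _ _ _ _ Hb Ecv) as [Eb1 Eb2]. subst.
        eapply G2; eauto.
Qed.


End Main.

Theorem mainTheorem13 (X : Type) (d : X -> X -> R)
  (add : X -> X -> X) (opp : X -> X) (zero : X) (I : pset (pset X)) :
  abelian_polish_group d add opp zero ->
  uncountable X ->
  proper_ideal I -> sigma_ideal I -> translation_invariant add I ->
  contains_singletons I -> has_Borel_base d I ->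
  (forall B, Borel d B -> ~ I B -> forall D : pset (pset X),
     subset D I -> card_lt D continuum ->
     card_eq (fun x => B x /\ ~ (exists A, D A /\ A x)) continuum) ->
  (exists a, (exists x y, d x y = a) /\ a <> 0 /\ forall x, I (fun y => d x y = a)) ->
  (forall (T : Type) (K : pset T), card_lt K continuum -> card_le (powerset K) continuum) ->
  exists Bs : R -> pset X,
    (forall xi eta, xi <> eta -> forall x, Bs xi x -> Bs eta x -> False) /\
    (forall xi, completely_nonmeasurable d I (Bs xi)) /\
    (forall xi, ~ two_covering add (Bs xi)) /\
    lt_S_covering add continuum (range Bs).
Proof.
  intros Hgrp Hunc Hprop Hsig _ Hsing Hbase H8 _ HP.
  exact (main_result X d add opp zero I Hgrp Hunc Hprop Hsig Hsing Hbase H8 HP).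
Qed.
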